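(* Let $G$ be a primitive strongly regular graph with parameters $(v,k,\lambda,\mu)$, and let $s$ be its smallest adjacency eigenvalue. Then $k/|s| > v^{1/6}/2$.
   Context: A graph is strongly regular with parameters $(v,k,\lambda,\mu)$ if it is a $k$-regular graph on $v$ vertices such that each edge lies in exactly $\lambda$ triangles and any two distinct non-adjacent vertices have exactly $\mu$ common neighbours; complete and edgeless graphs are excluded. A strongly regular graph is primitive if both it and its complement are connected. A connected strongly regular graph has, besides $k$, exactly two distinct adjacency eigenvalues $r>0$ and $s<-1$. *)

(* Defs.v *)
From HB Require Import structures.
From mathcomp Require Import all_boot all_order all_algebra.
From mathcomp Require Import reals exp.
Set Implicit Arguments. Unset Strict Implicit. Unset Printing Implicit Defensive.
Import Order.TTheory GRing.Theory Num.Theory.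
Local Open Scope ring_scope.

Definition simple_graph (T : finType) (e : rel T) : Prop :=
  symmetric e /\ irreflexive e.

Definition compl_rel (T : finType) (e : rel T) : rel T :=
  fun x y => (x != y) && ~~ e x y.

Definition srg (T : finType) (e : rel T) (v k lam mu : nat) : Prop :=
  simple_graph e /\
  #|T| = v /\
  (forall x : T, #|[set y | e x y]| = k) /\
  (forall x y : T, e x y -> #|[set z | e x z && e y z]| = lam) /\
  (forall x y : T, x != y -> ~~ e x y -> #|[set z | e x z && e y z]| = mu) /\
  (exists x y : T, e x y) /\
  (exists x y : T, compl_rel e x y).

Definition graph_connected (T : finType) (e : rel T) : Prop :=
  forall x y : T, connect e x y.

Definition primitive_srg (T : finType) (e : rel T) (v k lam mu : nat) : Prop :=
  srg e v k lam mu /\ graph_connected e /\ graph_connected (compl_rel e).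

Definition adjmx (R : nzRingType) (T : finType) (e : rel T) : 'M[R]_#|T| :=
  \matrix_(i, j) (e (enum_val i) (enum_val j))%:R.

Definition smallest_eigenvalue (R : realFieldType) (T : finType) (e : rel T) (s : R) : Prop :=
  eigenvalue (adjmx R e) s /\ forall t : R, eigenvalue (adjmx R e) t -> s <= t.

(* Main.v *)
Require Import Defs.
From HB Require Import structures.
From mathcomp Require Import all_boot all_order all_algebra.
From mathcomp Require Import reals exp.
From mathcomp.algebra_tactics Require Import ring lra.
Import Order.TTheory GRing.Theory Num.Theory.
Local Open Scope ring_scope.


Lemma final_ineq (R : realType) (k lam mu v m r g : R) :
  1 <= k -> 1 <= mu -> mu + 1 <= k -> 0 <= lam -> 1 <= v -> 0 < m ->
  r = lam - mu + m -> r * m = k - mu ->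
  k ^+ 2 = k + lam * k + mu * (v - 1 - k) ->
  g * ((k + m) * (r + m)) = k * v * (1 + r) -> 0 <= g ->
  v <= g ^+ 2 + g + 1 ->
  v * m ^+ 6 < 64 * k ^+ 6.
Proof.
move=> k1 mu1 muk lam0 v1 m0 er erm ek eg g0 vg.
have r0 : 0 < r by nra.
have vmu : v * mu = (k - r) * (k + m) by nra.
have mk : m <= k.
  rewrite leNgt; apply/negP => km.
  have r1 : r < 1 by nra.
  nra.
have [h|h] := leP m (2 * r).
- have m2 : m ^+ 2 < 2 * k by nra.
  have vk : v <= 2 * k ^+ 2 by nra.
  have m6 : m ^+ 6 < 8 * k ^+ 3.
    have -> : m ^+ 6 = (m ^+ 2) ^+ 3 by rewrite -exprM.
    have m20 : 0 <= m ^+ 2 by nra.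
    set y := m ^+ 2 in m2 m20 *.
    have y2 : y * y < 4 * k ^+ 2 by nra.
    have -> : y ^+ 3 = y * y * y by rewrite !exprS expr0 mulr1 mulrA.
    nra.
  set z := m ^+ 6 in m6 *.
  have z0 : 0 <= z by rewrite /z; apply: exprn_ge0; lra.
  have k5 : 16 * k ^+ 5 <= 64 * k ^+ 6.
    have -> : k ^+ 6 = k ^+ 5 * k by rewrite exprS mulrC.
    have : 0 <= k ^+ 5 by apply: exprn_ge0; lra.
    nra.
  have e5 : k ^+ 5 = k ^+ 2 * k ^+ 3 by rewrite -exprD.
  have k20 : 0 < k ^+ 2 by apply: exprn_gt0; lra.
  nra.
- have mu2 : m < 2 * mu by lra.
  have eg2 : g * ((r + m) * mu) = k * (1 + r) * (k - r).
    have km0 : 0 < k + m by lra.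
    apply: (mulIf (lt0r_neq0 km0)).
    transitivity (g * ((k + m) * (r + m)) * mu); first by ring.
    rewrite eg; transitivity (k * (1 + r) * (v * mu)); first by ring.
    by rewrite vmu; ring.
  have G1 : g * ((r + m) * m) <= 2 * (k * (1 + r) * (k - r)).
    rewrite -eg2.
    have : 0 <= g * (r + m) by apply: mulr_ge0; lra.
    nra.
  have G2 : k * (1 + r) * (k - r) <= k ^+ 2 * (1 + r).
    have : 0 <= k * (1 + r) by apply: mulr_ge0; lra.
    rewrite expr2; nra.
  have G3 : g * m ^+ 2 <= 2 * k ^+ 2 * (1 + r).
    have : g * m ^+ 2 <= g * ((r + m) * m).
      rewrite expr2; apply: ler_wpM2l => //; nra.
    lra.
  have G : g * m ^+ 3 <= 4 * k ^+ 3.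
    have -> : g * m ^+ 3 = (g * m ^+ 2) * m by rewrite exprSr mulrA.
    have : g * m ^+ 2 * m <= 2 * k ^+ 2 * (1 + r) * m by apply: ler_wpM2r; lra.
    have : 2 * k ^+ 2 * (1 + r) * m = 2 * k ^+ 2 * (m + (k - mu)) by rewrite -erm; ring.
    have : 0 <= k ^+ 2 by apply: exprn_ge0; lra.
    rewrite (exprS k 2). nra.
  have M3 : m ^+ 3 <= k ^+ 3 by rewrite lerXn2r // ?nnegrE; lra.
  have K1 : 1 <= k ^+ 3 by by rewrite exprn_ege1.
  have m30 : 0 < m ^+ 3 by apply: exprn_gt0.
  have -> : m ^+ 6 = m ^+ 3 * m ^+ 3 by rewrite -exprD.
  have -> : k ^+ 6 = k ^+ 3 * k ^+ 3 by rewrite -exprD.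
  set M := m ^+ 3 in G M3 m30 *.
  set K := k ^+ 3 in G M3 K1 *.
  set X := g * M in G *.
  have X0 : 0 <= X by rewrite /X; apply: mulr_ge0 => //; lra.
  have : v * (M * M) <= X ^+ 2 + X * M + M * M.
    have -> : X ^+ 2 + X * M + M * M = (g ^+ 2 + g + 1) * (M * M) by rewrite /X; ring.
    apply: ler_wpM2r => //; nra.
  have : X ^+ 2 <= 16 * (K * K) by rewrite expr2; nra.
  have : X * M <= 4 * (K * K) by nra.
  have : M * M <= K * K by nra.
  nra.
Qed.


Section Rank.
Variable F : fieldType.

Lemma idem_tr n (E : 'M[F]_n) : E *m E = E -> \tr E = (\rank E)%:R.
Proof.
move=> EE.
move: (col_base_full E) (row_base_free E) (mulmx_base E).
move: (col_base E) (row_base E) => C B Cf Bf eCB.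
have [C' C'C] := row_fullP Cf.
have [B' BB'] := row_freeP Bf.
have BC : B *m C = 1%:M.
  have : C *m B *m (C *m B) = C *m B by rewrite eCB.
  move/(congr1 (fun X => C' *m X *m B')) => /=.
  rewrite !mulmxA C'C mul1mx -!mulmxA BB' mulmx1.
  by [].
by rewrite -{1}eCB mxtrace_mulC BC mxtrace1.
Qed.

Lemma proj_tr n (X : 'M[F]_n) c : X *m X = c *: X -> c != 0 ->
  \tr X = c * (\rank X)%:R.
Proof.
move=> XX c0.
have E : (c^-1 *: X) *m (c^-1 *: X) = c^-1 *: X.
  by rewrite -scalemxAl -scalemxAr XX !scalerA -mulrA mulVf // mulr1.
have := @idem_tr _ _ E; rewrite mxtraceZ mxrank_scale_nz ?invr_eq0 // => h.
by rewrite -h mulrA divff // mul1r.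
Qed.

Lemma rank_scale_le m n a (X : 'M[F]_(m, n)) : (\rank (a *: X) <= \rank X)%N.
Proof. by rewrite -mul_scalar_mx mxrankM_maxr. Qed.

Lemma rank_sum_le m n (I : Type) (r : seq I) (P : pred I) (G : I -> 'M[F]_(m, n)) :
  (\rank (\sum_(i <- r | P i) G i)%R <= \sum_(i <- r | P i) \rank (G i))%N.
Proof.
apply: (big_ind2 (fun X b => \rank X <= b)%N); first by rewrite mxrank0.
  by move=> X1 b1 X2 b2 h1 h2; apply: leq_trans (mxrank_add _ _) (leq_add h1 h2).
by [].
Qed.

Lemma rank_had_le m n (X : 'M[F]_(m, n)) :
  (\rank (\matrix_(i, j) (X i j) ^+ 2) <= (\rank X) ^ 2)%N.
Proof.
set g := \rank X.
move: (mulmx_base X); move: (col_base X) (row_base X) => C B eX.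
have Xij i j : X i j = (C *m B) i j by rewrite eX.
have -> : \matrix_(i, j) (X i j) ^+ 2 =
  \sum_(l < g) \sum_(l' < g)
    ((\col_i (C i l * C i l')) *m (\row_j (B l j * B l' j))).
  apply/matrixP => i j; rewrite !mxE Xij !mxE expr2 big_distrlr /=.
  rewrite summxE; apply: eq_bigr => l _; rewrite summxE; apply: eq_bigr => l' _.
  rewrite !mxE big_ord1 !mxE; ring.
apply: leq_trans; first exact: rank_sum_le.
rewrite expnS expn1 -[X in (_ <= X * _)%N]card_ord -sum_nat_const.
apply: leq_sum => l _; apply: leq_trans; first exact: rank_sum_le.
rewrite -[X in (_ <= X)%N]card_ord -sum1_card.
apply: leq_sum => l' _; exact: mulmx_max_rank.
Qed.

Lemma rank_J n : (\rank (const_mx (1%R : F) : 'M[F]_n) <= 1)%N.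
Proof.
have -> : (const_mx (1%R : F) : 'M[F]_n) = (const_mx (1%R:F) : 'M_(n, 1)) *m (const_mx (1%R:F) : 'M_(1, n)).
  by apply/matrixP => i j; rewrite !mxE big_ord1 !mxE mulr1.
exact: mulmx_max_rank.
Qed.

End Rank.

Section Spec.
Variables (R : realType) (n : nat) (A : 'M[R]_n) (k lam mu : R).
Local Notation J := (const_mx 1 : 'M[R]_n).
Hypotheses (AJ : A *m J = k *: J)
  (AA : A *m A = k%:M + lam *: A + mu *: (J - 1%:M - A)) (trA : \tr A = 0).

Lemma mxtraceB (X Y : 'M[R]_n) : \tr (X - Y) = \tr X - \tr Y.
Proof. by rewrite /mxtrace -sumrB; apply: eq_bigr => i _; rewrite !mxE. Qed.

Lemma AA' : A *m A = (k - mu)%:M + (lam - mu) *: A + mu *: J.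
Proof. by rewrite AA; apply/matrixP => i j; rewrite !mxE; ring. Qed.

Lemma quad a b : (A - a%:M) *m (A - b%:M) = A *m A - (a + b) *: A + (a * b)%:M.
Proof.
rewrite mulmxBl !mulmxBr mul_mx_scalar mul_scalar_mx -scalar_mxM.
by apply/matrixP => i j; rewrite !mxE; ring.
Qed.

Lemma quadJ a b : a + b = lam - mu -> a * b = mu - k ->
  (A - a%:M) *m (A - b%:M) = mu *: J.
Proof.
move=> hab hp; rewrite quad AA' hab hp.
by apply/matrixP => i j; rewrite !mxE; ring.
Qed.

Lemma AkJ : (A - k%:M) *m J = 0.
Proof. by rewrite mulmxBl AJ mul_scalar_mx subrr. Qed.

Lemma cubic a b : a + b = lam - mu -> a * b = mu - k ->
  (A - k%:M) *m (A - a%:M) *m (A - b%:M) = 0.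
Proof. by move=> hab hp; rewrite -mulmxA quadJ // -scalemxAr AkJ scaler0. Qed.

Lemma trJ : \tr J = n%:R.
Proof.
rewrite /mxtrace (eq_bigr (fun _ => 1)); last by move=> i _; rewrite mxE.
by rewrite sumr_const card_ord.
Qed.

Lemma trAA : \tr (A *m A) = k * n%:R.
Proof.
rewrite AA !mxtraceD !mxtraceZ !mxtraceB trA !mxtrace_scalar trJ.
rewrite -mulr_natr; ring.
Qed.

Lemma tr_quad a : \tr ((A - k%:M) *m (A - a%:M)) = k * n%:R * (1 + a).
Proof.
rewrite quad mxtraceD mxtraceB mxtraceZ trAA trA mxtrace_scalar -mulr_natr; ring.
Qed.


Lemma not_eig_unit t : ~~ eigenvalue A t -> (A - t%:M) \in unitmx.
Proof. by rewrite /eigenvalue /eigenspace negbK kermx_eq0 row_free_unit. Qed.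

Lemma eig_exists a b : a + b = lam - mu -> a * b = mu - k ->
  (0 < n)%N -> 0 < k -> 0 < a -> eigenvalue A b.
Proof.
move=> hab hp n0 k0 a0; case E: (eigenvalue A b) => //; move/negbT: E => /not_eig_unit U.
have Z : (A - k%:M) *m (A - a%:M) = 0.
  by rewrite -[LHS](mulmxK U) (cubic _ _ hab hp) mul0mx.
have := tr_quad a; rewrite Z mxtrace0 => /esym/eqP.
have : 0 < k * n%:R * (1 + a).
  by apply: mulr_gt0; [apply: mulr_gt0 => //; rewrite ltr0n | lra].
by move=> /lt0r_neq0 /negPf ->.
Qed.

Lemma eig_root t : eigenvalue A t -> t != k ->
  t ^+ 2 - (lam - mu) * t - (k - mu) = 0.
Proof.
move=> /eigenvalueP [x xA x0] tk.
have xJ : x *m J = 0.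
  have : (t - k) *: (x *m J) = 0.
    by rewrite scalerBl scalemxAl -xA -mulmxA AJ -scalemxAr subrr.
  by move/eqP; rewrite scaler_eq0 subr_eq0 (negPf tk) /= => /eqP.
have : (t ^+ 2 - (lam - mu) * t - (k - mu)) *: x = 0.
  have h1 : x *m (A *m A) = t ^+ 2 *: x.
    by rewrite mulmxA xA -scalemxAl xA scalerA expr2.
  move: h1; rewrite AA' !mulmxDr mul_mx_scalar -!scalemxAr xA xJ scaler0 addr0.
  move=> h1; rewrite !scalerBl -h1 scalerA.
  by apply/matrixP => i j; rewrite !mxE; ring.
by move/eqP; rewrite scaler_eq0 (negPf x0) orbF => /eqP.
Qed.


Hypotheses (Adiag : forall i, A i i = 0)
  (A01 : forall i j, i != j -> A i j = 0 \/ A i j = 1).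

Lemma main_spec (s : R) : (0 < n)%N -> 0 < mu -> mu < k ->
  eigenvalue A s -> (forall t, eigenvalue A t -> s <= t) ->
  exists g : nat, [/\ s < 0, s ^+ 2 - (lam - mu) * s - (k - mu) = 0,
    g%:R * ((k - s) * (lam - mu - s - s)) = k * n%:R * (1 + (lam - mu - s)) &
    (n <= g ^ 2 + g + 1)%N].
Proof.
move=> n0 mu0 muk es smin.
set q0 := lam - mu.
set D := q0 ^+ 2 + 4 * (k - mu).
have D0 : 0 <= D by rewrite /D; apply: addr_ge0; [exact: sqr_ge0 | lra].
have sD := sqr_sqrtr D0.
have sD0 : 0 <= Num.sqrt D := sqrtr_ge0 D.
set sq := Num.sqrt D in sD sD0.
set s0 := (q0 - sq) / 2; set r0 := (q0 + sq) / 2.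
have Dq : q0 ^+ 2 < D by rewrite /D; lra.
have sqq1 : q0 < sq by nra.
have sqq2 : - q0 < sq by nra.
have es0 : eigenvalue A s0.
  have e1 : r0 + s0 = lam - mu by rewrite /r0 /s0 /q0; field.
  have e2 : r0 * s0 = mu - k.
    rewrite /r0 /s0.
    have -> : (q0 + sq) / 2 * ((q0 - sq) / 2) = (q0 ^+ 2 - sq ^+ 2) / 4 by field.
    by rewrite sD /D; field.
  apply: (@eig_exists r0 s0) => //; rewrite /r0; lra.
have ss0 : s <= s0 := smin _ es0.
have sneg : s < 0 by rewrite /s0 in ss0; lra.
have sk : s != k by apply/negP => /eqP e; lra.
have root := @eig_root s es sk.
set r := lam - mu - s.
have rs : r * s = mu - k by rewrite /r; nra.
have rpos : 0 < r by nra.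
set P := (A - k%:M) *m (A - r%:M).
have PA : P *m A = s *: P.
  have Z := @cubic r s (ltac:(rewrite /r; ring)) rs.
  apply/eqP; rewrite -subr_eq0; apply/eqP.
  by rewrite -mul_mx_scalar -mulmxBr.
have Pc : forall c, P *m (A - c%:M) = (s - c) *: P.
  by move=> c; rewrite mulmxBr PA mul_mx_scalar scalerBl.
have PP : P *m P = ((s - k) * (s - r)) *: P.
  by rewrite {2}/P mulmxA Pc -scalemxAl Pc scalerA.
have c0 : (s - k) * (s - r) != 0 by apply/lt0r_neq0; nra.
have trP := @proj_tr _ _ _ _ PP c0.
exists (\rank P); split => //.
  have h := tr_quad r; rewrite -/P trP in h.
  by rewrite -/r -h; ring.
set p0 := k - mu + k * r + mu; set p1 := lam - mu - k - r + mu; set p2 := mu.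
have Pij i j : P i j = (k - mu + k * r) * (i == j)%:R + (lam - mu - k - r) * A i j + mu.
  rewrite /P quad AA' !mxE; ring.
set d := (p0 - p1) * (p0 - p2).
have d0 : d != 0.
  have kr0 : 0 < k * r by apply: mulr_gt0; lra.
  have er : r = lam - mu - s by [].
  have h1 : 0 < p0 - p1 by rewrite /p0 /p1; lra.
  have h2 : 0 < p0 - p2 by rewrite /p0 /p2; lra.
  by apply/lt0r_neq0; rewrite /d; apply: mulr_gt0.
have eH : d *: 1%:M = \matrix_(i, j) (P i j) ^+ 2 - (p1 + p2) *: P + (p1 * p2) *: J.
  have PE : P = \matrix_(i, j) ((k - mu + k * r) * (i == j)%:R + (lam - mu - k - r) * A i j + mu).
    by apply/matrixP => i j; rewrite Pij mxE.
  rewrite PE; apply/matrixP => i j; rewrite !mxE.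
  have [->|ij] := eqVneq i j.
    rewrite Adiag /d /p0 /p1 /p2 /=; ring.
  rewrite /=; case: (A01 _ _ ij) => ->; rewrite /d /p0 /p1 /p2; ring.
have : \rank (d *: (1%:M : 'M[R]_n)) = n by rewrite mxrank_scale_nz // mxrank1.
move=> hn; apply: (@leq_trans (\rank (d *: (1%:M : 'M[R]_n)))); first by rewrite hn.
rewrite eH.
apply: leq_trans (mxrank_add _ _) _.
apply: leq_add; last by apply: leq_trans; [exact: rank_scale_le | exact: rank_J].
rewrite -scaleNr; apply: leq_trans (mxrank_add _ _) _.
apply: leq_add; first exact: rank_had_le.
exact: rank_scale_le.
Qed.


Lemma JJ : J *m J = n%:R *: J.
Proof.
apply/matrixP => i j; rewrite !mxE.
under eq_bigr do rewrite !mxE mulr1.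
by rewrite sumr_const card_ord mulr1.
Qed.

Lemma count_id (i0 : 'I_n) : k ^+ 2 = k + lam * k + mu * (n%:R - 1 - k).
Proof.
have h : (A *m A) *m J = (k ^+ 2) *: J.
  by rewrite -mulmxA AJ -scalemxAr AJ scalerA -expr2.
rewrite AA !mulmxDl mul_scalar_mx -!scalemxAl !mulmxBl mul1mx AJ JJ in h.
have := congr1 (fun M : 'M[R]_n => M i0 i0) h; rewrite !mxE => hh.
transitivity (k ^+ 2 * 1); first by rewrite mulr1.
rewrite -hh; ring.
Qed.

End Spec.

Section Comb.
Variables (T : finType) (e : rel T) (v k lam mu : nat).
Hypothesis H : primitive_srg e v k lam mu.

Let Nb (x : T) := [set y | e x y].

Lemma esym' : symmetric e. Proof. by case: H => [[[S I] [C [D [L [M [E1 E2]]]]]] [C1 C2]]. Qed.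
Lemma eirr : irreflexive e. Proof. by case: H => [[[S I] [C [D [L [M [E1 E2]]]]]] [C1 C2]]. Qed.
Lemma cardT : #|T| = v. Proof. by case: H => [[[S I] [C [D [L [M [E1 E2]]]]]] [C1 C2]]. Qed.
Lemma degk x : #|[set y | e x y]| = k. Proof. by case: H => [[[S I] [C [D [L [M [E1 E2]]]]]] [C1 C2]]. Qed.
Lemma cnt_lam x y : e x y -> #|[set z | e x z && e y z]| = lam.
Proof. by case: H => [[[S I] [C [D [L [M [E1 E2]]]]]] [C1 C2]]; exact: L. Qed.
Lemma cnt_mu x y : x != y -> ~~ e x y -> #|[set z | e x z && e y z]| = mu.
Proof. by case: H => [[[S I] [C [D [L [M [E1 E2]]]]]] [C1 C2]]; exact: M. Qed.
Lemma has_edge : exists x y, e x y. Proof. by case: H => [[[S I] [C [D [L [M [E1 E2]]]]]] [C1 C2]]. Qed.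
Lemma has_nonedge : exists x y, compl_rel e x y.
Proof. by case: H => [[[S I] [C [D [L [M [E1 E2]]]]]] [C1 C2]]. Qed.
Lemma conn : graph_connected e. Proof. by case: H => [[[S I] [C [D [L [M [E1 E2]]]]]] [C1 C2]]. Qed.
Lemma cconn : graph_connected (compl_rel e). Proof. by case: H => [[[S I] [C [D [L [M [E1 E2]]]]]] [C1 C2]]. Qed.

Lemma k_pos : (0 < k)%N.
Proof.
have [x [y exy]] := has_edge; rewrite -(degk x) card_gt0.
by apply/set0Pn; exists y; rewrite inE.
Qed.

Lemma v_pos : (0 < v)%N.
Proof. have [x _] := has_edge; rewrite -cardT; by apply/card_gt0P; exists x. Qed.

Lemma mu_le_k : (mu <= k)%N.
Proof.
have [x [y /andP [xy nexy]]] := has_nonedge.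
rewrite -(cnt_mu _ _ xy nexy) -(degk x); apply: subset_leq_card.
by apply/subsetP => z; rewrite !inE => /andP [].
Qed.

Lemma mu_pos : (0 < mu)%N.
Proof.
rewrite lt0n; apply/negP => /eqP mu0.
have [x [y /andP [xy nexy]]] := has_nonedge.
pose a := [pred z | (z == x) || e x z].
have step u w : e u w -> u \in a -> w \in a.
  move=> euw; rewrite !inE => /orP [/eqP eu|exu]; first by rewrite -eu euw orbT.
  case: eqP => //= wx; apply/negPn/negP => nexw.
  have : #|[set z | e x z && e w z]| = 0%N.
    by rewrite (cnt_mu _ _ _ nexw) //; apply/eqP => xw; apply: wx.
  move/eqP; rewrite cards_eq0 => /eqP/setP/(_ u); rewrite !inE exu esym' euw.
  by [].
have cl : closed e a.
  move=> u w euw; apply/idP/idP; first exact: step.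
  by apply: step; rewrite esym'.
have := closed_connect cl (conn x y).
rewrite !inE eqxx /= eq_sym (negPf xy) (negPf nexy) /=.
by [].
Qed.

Lemma mu_lt_k : (mu < k)%N.
Proof.
rewrite ltn_neqAle mu_le_k andbT; apply/negP => /eqP muk.
have same u w : compl_rel e u w -> [set t | e u t] = [set t | e w t].
  move=> /andP [uw neuw].
  have s1 : [set z | e u z && e w z] \subset [set t | e u t].
    by apply/subsetP => z; rewrite !inE => /andP [].
  have s2 : [set z | e u z && e w z] \subset [set t | e w t].
    by apply/subsetP => z; rewrite !inE => /andP [].
  have c1 : (#|[set t | e u t]| <= #|[set z | e u z && e w z]|)%N.
    by rewrite (cnt_mu _ _ uw neuw) degk muk.
  have c2 : (#|[set t | e w t]| <= #|[set z | e u z && e w z]|)%N.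
    by rewrite (cnt_mu _ _ uw neuw) degk muk.
  have /eqP e1 : [set z | e u z && e w z] == [set t | e u t] by rewrite eqEcard s1 c1.
  have /eqP e2 : [set z | e u z && e w z] == [set t | e w t] by rewrite eqEcard s2 c2.
  by rewrite -e1 e2.
have [x [y exy]] := has_edge.
pose a := [pred z | [set t | e z t] == [set t | e x t]].
have cl : closed (compl_rel e) a.
  move=> u w cuw; rewrite !inE (same _ _ cuw) //.
have := closed_connect cl (cconn x y).
rewrite !inE eqxx => /esym/eqP/setP/(_ y); rewrite !inE exy eirr.
by [].
Qed.


Variable R : realType.
Local Notation A := (adjmx R e).
Local Notation J := (const_mx 1 : 'M[R]_#|T|).

Lemma sum_ev (P : pred T) :
  \sum_(l < #|T|) ((P (enum_val l))%:R : R) = (#|[set y | P y]|%:R).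
Proof.
rewrite (reindex (@enum_rank T)) /=; last first.
  by apply: onW_bij; exact: enum_rank_bij.
under eq_bigr do rewrite enum_rankK.
rewrite -sum1_card natr_sum [RHS]big_mkcond /=; apply: eq_bigr => t _.
by rewrite inE; case: (P t).
Qed.



Lemma Aij i j : A i j = (e (enum_val i) (enum_val j))%:R.
Proof. by rewrite /adjmx mxE. Qed.

Lemma adjAdiag i : A i i = 0.
Proof. by rewrite Aij eirr. Qed.

Lemma adjA01 i j : i != j -> A i j = 0 \/ A i j = 1.
Proof. by rewrite Aij; case: (e _ _); [right|left]. Qed.

Lemma adjtrA : \tr A = 0.
Proof. by rewrite /mxtrace big1 // => i _; rewrite adjAdiag. Qed.

Lemma adjAJ : A *m J = k%:R *: J.
Proof.
apply/matrixP => i j; rewrite !mxE.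
under eq_bigr do rewrite [const_mx _ _ _]mxE mulr1 Aij.
by rewrite mulr1 -(degk (enum_val i)); exact: (sum_ev (e (enum_val i))).
Qed.

Lemma adjAA : A *m A = k%:R%:M + lam%:R *: A + mu%:R *: (J - 1%:M - A).
Proof.
apply/matrixP => i j; rewrite !mxE.
under eq_bigr do rewrite !Aij -natrM mulnb (esym' (enum_val _) (enum_val j)).
rewrite (sum_ev (fun y => e (enum_val i) y && e (enum_val j) y)).
have [<-|ij] := eqVneq i j.
  rewrite eirr ?eqxx /=.
  have -> : [set y | e (enum_val i) y && e (enum_val i) y] = [set y | e (enum_val i) y].
    by apply/setP => y; rewrite !inE andbb.
  by rewrite degk; ring.
have xy : enum_val i != enum_val j by apply: contra ij => /eqP/enum_val_inj ->.
rewrite mulr0n.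
case exy: (e (enum_val i) (enum_val j)).
  by rewrite cnt_lam //=; ring.
by rewrite cnt_mu ?exy //=; ring.
Qed.


Lemma final_comb (s : R) : smallest_eigenvalue e s ->
  k%:R / `|s| > (v%:R `^ (6%:R^-1)) / 2.
Proof.
case=> es smin.
have n0 : (0 < #|T|)%N by rewrite cardT; exact: v_pos.
have mu0 : (0 : R) < mu%:R by rewrite ltr0n mu_pos.
have muk : (mu%:R : R) < k%:R by rewrite ltr_nat mu_lt_k.
have [g [sneg root eg vg]] := @main_spec R #|T| A k%:R lam%:R mu%:R adjAJ adjAA adjtrA
  adjAdiag adjA01 s n0 mu0 muk es smin.
have cid := @count_id R #|T| A k%:R lam%:R mu%:R adjAJ adjAA (Ordinal n0).
rewrite cardT in eg vg cid.
set m := - s.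
have key : v%:R * m ^+ 6 < 64 * (k%:R : R) ^+ 6.
  apply: (@final_ineq R k%:R lam%:R mu%:R v%:R m (lam%:R - mu%:R + m) g%:R).
  - by rewrite ler1n k_pos.
  - by rewrite ler1n mu_pos.
  - by rewrite natr1 ler_nat mu_lt_k.
  - by rewrite ler0n.
  - by rewrite ler1n v_pos.
  - by rewrite /m; lra.
  - by [].
  - rewrite /m; transitivity (s ^+ 2 - (lam%:R - mu%:R) * s); first by ring.
    by apply/eqP; rewrite -subr_eq0; apply/eqP; rewrite -root; ring.
  - exact: cid.
  - by rewrite -eg /m; ring.
  - by rewrite ler0n.
  - by rewrite -natrX -natrD natr1 ler_nat -addn1.
have m0 : 0 < m by rewrite /m; lra.
have -> : `|s| = m by rewrite ltr0_norm.
set y := v%:R `^ (6%:R^-1).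
have y0 : 0 <= y by exact: powR_ge0.
have y6 : y ^+ 6 = v%:R.
  rewrite /y -powR_mulrn // -powRrM mulVf ?pnatr_eq0 // powRr1 //.
rewrite ltNge; apply/negP => hle.
have h2 : 2 * k%:R / m <= y.
  by rewrite -mulrA; lra.
have k0 : (0 : R) <= 2 * k%:R / m by apply: divr_ge0; [rewrite mulr_ge0 ?ler0n | lra].
have h6 : (2 * k%:R / m) ^+ 6 <= y ^+ 6 by rewrite lerXn2r // nnegrE.
rewrite y6 in h6.
have : (2 * k%:R / m) ^+ 6 * m ^+ 6 = 64 * (k%:R : R) ^+ 6.
  by rewrite -exprMn mulfVK ?lt0r_neq0 // exprMn; ring.
have m60 : 0 < m ^+ 6 by apply: exprn_gt0.
move=> h; have := ler_wpM2r (ltW m60) h6; rewrite h; lra.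
Qed.

End Comb.


Theorem lemma1p5 (R : realType) (T : finType) (e : rel T) (v k lam mu : nat) (s : R) :
  primitive_srg e v k lam mu ->
  smallest_eigenvalue e s ->
  k%:R / `|s| > (v%:R `^ (6%:R^-1)) / 2.
Proof. by move=> Hp Hs; exact: (@final_comb T e v k lam mu Hp R s Hs). Qed.
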